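(* Let $f$ be convex, $C^2$, with $\nabla^2 f\succ0$ everywhere, and $L_{\text{semi}}$-semi-strongly self-concordant; let $L_{\text{est}}\ge L_{\text{semi}}$ and $0<c<1$. If $x_k$ satisfies $\|\nabla f(x_k)\|_{x_k}^*\le\frac{(2c+1)^2-1}{2L_{\text{est}}}$ and $x_{k+1}$ is the AICN iterate computed from $x_k$, then $$[\nabla^2 f(x_{k+1})]^{-1}\preceq(1-c)^{-2}[\nabla^2 f(x_k)]^{-1}.$$
   Context: Local norms: $\|h\|_x=\langle\nabla^2 f(x)h,h\rangle^{1/2}$, $\|g\|_x^*=\langle g,[\nabla^2 f(x)]^{-1}g\rangle^{1/2}$; $\|H\|_{op}=\sup_{v\neq0}\|Hv\|_x^*/\|v\|_x$ at base point $x$. $f$ is $L_{\text{semi}}$-semi-strongly self-concordant if $\|\nabla^2 f(y)-\nabla^2 f(x)\|_{op}\le L_{\text{semi}}\|y-x\|_x$ for all $x,y$ (operator norm at base point $x$). AICN step with parameter $L_{\text{est}}>0$: $x_{k+1}=x_k-\alpha_k[\nabla^2 f(x_k)]^{-1}\nabla f(x_k)$ with $\alpha_k=\frac{-1+\sqrt{1+2L_{\text{est}}\|\nabla f(x_k)\|_{x_k}^*}}{L_{\text{est}}\|\nabla f(x_k)\|_{x_k}^*}$ (and $\alpha_k:=1$ if $\nabla f(x_k)=0$). $\preceq$ is the Loewner order. *)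

(* Defs.v *)
From HB Require Import structures.
From mathcomp Require Import all_boot all_order all_algebra.
From mathcomp Require Import all_classical all_reals all_analysis.
Set Implicit Arguments. Unset Strict Implicit. Unset Printing Implicit Defensive.
Import Order.TTheory GRing.Theory Num.Theory.
Import numFieldNormedType.Exports.
Local Open Scope ring_scope.

Section Defs.
Variables (R : realType) (n : nat).
Notation vec := 'cV[R]_n.
Notation mat := 'M[R]_n.

Definition dotv (u v : vec) : R := \sum_(i < n) u i ord0 * v i ord0.

Definition qform (A : mat) (v : vec) : R := dotv (A *m v) v.

Definition convex_fun (f : vec -> R) : Prop :=
  forall (x y : vec) (t : R), 0 <= t <= 1 ->
    f (t *: x + (1 - t) *: y) <= t * f x + (1 - t) * f y.

(* g is the gradient of f and H is the Hessian of f, with f of class C^2: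
   directional derivatives of f are <g x, v>, directional derivatives of g
   are H x v, and H is continuous (continuous Gateaux derivatives give C^2). *)
Definition is_C2_with (f : vec -> R) (g : vec -> vec) (H : vec -> mat) : Prop :=
  (forall x v : vec, is_derive x v f (dotv (g x) v)) /\
  (forall x v : vec, is_derive x v g (H x *m v)) /\
  continuous H.

Definition pos_def (A : mat) : Prop := forall v : vec, v != 0 -> 0 < qform A v.

Definition loewner_le (A B : mat) : Prop := forall v : vec, qform A v <= qform B v.

Definition lnorm (H : vec -> mat) (x h : vec) : R := Num.sqrt (qform (H x) h).
Definition dnorm (H : vec -> mat) (x g : vec) : R := Num.sqrt (qform (invmx (H x)) g).

(* ||H(y) - H(x)||_op <= L ||y - x||_x, where the operator norm at base point x
   is sup_{v <> 0} ||(H y - H x) v||_x^* / ||v||_x ; "sup <= bound" is unfolded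
   pointwise (multiplied through by ||v||_x > 0; trivial for v = 0). *)
Definition semi_strongly_sc (H : vec -> mat) (L : R) : Prop :=
  forall x y v : vec,
    dnorm H x ((H y - H x) *m v) <= L * lnorm H x (y - x) * lnorm H x v.

Definition aicn_alpha (g : vec -> vec) (H : vec -> mat) (Lest : R) (x : vec) : R :=
  if g x == 0 then 1
  else (-1 + Num.sqrt (1 + 2 * Lest * dnorm H x (g x))) / (Lest * dnorm H x (g x)).

Definition aicn_step (g : vec -> vec) (H : vec -> mat) (Lest : R) (x : vec) : vec :=
  x - aicn_alpha g H Lest x *: (invmx (H x) *m g x).

End Defs.

(* Main.v *)
Require Import Defs.
From HB Require Import structures.
From mathcomp Require Import all_boot all_order all_algebra.
From mathcomp Require Import all_classical all_reals all_analysis.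
From mathcomp Require Import ring lra.
Import Order.TTheory GRing.Theory Num.Theory.
Import numFieldNormedType.Exports.
Local Open Scope ring_scope.
Set Implicit Arguments. Unset Strict Implicit. Unset Printing Implicit Defensive.

Section S.
Variables (R : realType) (n : nat).
Notation vec := 'cV[R]_n.

Lemma is_derive_line (F : vec -> R) (a u : vec) (s0 d : R) :
  is_derive (a + s0 *: u) u F d -> is_derive s0 1 (fun s => F (a + s *: u)) d.
Proof.
case=> Hd Hv.
have E : (fun h : R => h^-1 *: (((fun s => F (a + s *: u)) \o shift s0) (h *: 1) - F (a + s0 *: u)))
   = (fun h : R => h^-1 *: ((F \o shift (a + s0 *: u)) (h *: u) - F (a + s0 *: u))).
  apply/funext => h /=. by rewrite scaler1 scalerDl addrCA addrA.
split; first by rewrite /derivable E.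
by rewrite /derive E.
Qed.

Lemma is_derive_dot (g : vec -> vec) (p w u : vec) (dg : vec) :
  is_derive p w g dg -> is_derive p w (fun q => dotv (g q) u) (dotv dg u).
Proof.
move=> Hg.
have Hi : forall i : 'I_n, is_derive p w (fun q => g q i ord0) (dg i ord0).
  move=> i; have Hd : derivable g p w by [].
  have := derive_mx Hd; rewrite derive_val => ->; rewrite mxE.
  by apply: derivableP; move/derivable_mxP: Hd; apply.
have -> : (fun q => dotv (g q) u) = \sum_(i < n) (fun q => u i ord0 *: g q i ord0).
  apply/funext => q; rewrite /dotv; elim/big_rec2: _ => // i y1 y2 _ ->.
  by rewrite /= mulrC.
rewrite /dotv.
have -> : \sum_(i < n) dg i ord0 * u i ord0 = \sum_(i < n) u i ord0 *: dg i ord0.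
  by apply: eq_bigr => i _; rewrite mulrC.
apply: is_derive_sum => i.
Qed.
End S.


Section S.
Variables (R : realType) (n : nat).
Notation vec := 'cV[R]_n.

Lemma is_derive_shiftv (F : vec -> R) (p c w : vec) (d : R) :
  is_derive (p + c) w F d -> is_derive p w (fun q => F (q + c)) d.
Proof.
case=> Hd Hv.
have E : (fun h : R => h^-1 *: (((fun q => F (q + c)) \o shift p) (h *: w) - F (p + c)))
   = (fun h : R => h^-1 *: ((F \o shift (p + c)) (h *: w) - F (p + c))).
  apply/funext => h /=. by rewrite addrA.
split; first by rewrite /derivable E.
by rewrite /derive E.
Qed.

Lemma mvt_line (F dF : vec -> R) (a u : vec) (e : R) : 0 < e ->
  (forall p, is_derive p u F (dF p)) ->
  exists2 s, 0 <= s <= e & F (a + e *: u) - F a = dF (a + s *: u) * e.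
Proof.
move=> e0 HF.
have Hd : forall s : R, is_derive s (1:R) (fun s : R => F (a + s *: u)) (dF (a + s *: u)).
  by move=> s; apply: is_derive_line.
have [s sin Hs] := MVT (f := fun s => F (a + s *: u)) (df := fun s => dF (a + s *: u)) e0
  (fun s _ => Hd s) (derivable_within_continuous (fun s _ => @ex_derive _ _ _ _ _ _ _ (Hd s))).
exists s.
  by move: sin; rewrite in_itv /= => /andP[/ltW -> /ltW ->].
by move: Hs; rewrite scale0r addr0 subr0.
Qed.

End S.


Section S.
Variables (R : realType) (n : nat).
Notation vec := 'cV[R]_n.
Variables (f : vec -> R) (g : vec -> vec) (H : vec -> 'M[R]_n).
Hypothesis Df : forall x v : vec, is_derive x v f (dotv (g x) v).
Hypothesis Dg : forall x v : vec, is_derive x v g (H x *m v).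

Lemma mixed (x u v : vec) (e : R) : 0 < e ->
  exists s, exists t, [/\ 0 <= s <= e, 0 <= t <= e &
    f (x + e *: u + e *: v) - f (x + e *: v) - f (x + e *: u) + f x
    = dotv (H (x + s *: u + t *: v) *m v) u * e * e].
Proof.
move=> e0.
pose F := fun p => f (p + e *: v) - f p.
pose dF := fun p => dotv (g (p + e *: v)) u - dotv (g p) u.
have HF : forall p, is_derive p u F (dF p).
  move=> p; have := is_deriveB (is_derive_shiftv (Df (p + e *: v) u)) (Df p u).
  by [].
have [s sin Hs] := mvt_line x e0 HF.
have HG : forall p, is_derive p v (fun q => dotv (g q) u) (dotv (H p *m v) u).
  by move=> p; apply: is_derive_dot.
have [t tin Ht] := mvt_line (x + s *: u) e0 HG.
exists s, t; split => //.
move: Hs; rewrite /F /dF Ht => <-.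
rewrite addrAC; lra.
Qed.

End S.


Section S.
Variables (R : realType) (n : nat).
Notation vec := 'cV[R]_n.

Lemma entry_le (M : 'M[R]_n) i j : `|M i j| <= `|M|.
Proof.
rewrite [leRHS]/Num.Def.normr/= mx_normrE.
exact: (le_bigmax _ (fun ij : 'I_n * 'I_n => `|M ij.1 ij.2|) (i, j)).
Qed.

Definition Kc (u v : vec) : R := \sum_(i < n) \sum_(j < n) `|v j ord0| * `|u i ord0|.

Lemma Kc_ge0 u v : 0 <= Kc u v.
Proof. by apply: sumr_ge0 => i _; apply: sumr_ge0 => j _; rewrite mulr_ge0. Qed.

Lemma dot_bound (M : 'M[R]_n) (u v : vec) : `|dotv (M *m v) u| <= `|M| * Kc u v.
Proof.
rewrite /dotv /Kc mulr_sumr; apply: le_trans (ler_norm_sum _ _ _) _.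
apply: ler_sum => i _; rewrite normrM mxE mulr_sumr.
apply: le_trans (ler_wpM2r (normr_ge0 _) (ler_norm_sum _ _ _)) _.
rewrite mulr_suml; apply: ler_sum => j _.
rewrite normrM -mulrA; apply: ler_wpM2r; first by rewrite mulr_ge0.
exact: entry_le.
Qed.

Lemma dotvBl (a b c : vec) : dotv (a - b) c = dotv a c - dotv b c.
Proof. by rewrite /dotv -sumrB; apply: eq_bigr => i _; rewrite !mxE mulrBl. Qed.


Lemma hess_sym (f : vec -> R) (g : vec -> vec) (H : vec -> 'M[R]_n) :
  (forall x v : vec, is_derive x v f (dotv (g x) v)) ->
  (forall x v : vec, is_derive x v g (H x *m v)) ->
  continuous H ->
  forall x u v : vec, dotv (H x *m v) u = dotv (H x *m u) v.
Proof.
move=> Df Dg Hc x u v.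
apply/eqP; rewrite -subr_eq0; apply/negPn/negP => hd.
set d := dotv (H x *m v) u - dotv (H x *m u) v in hd.
set K := Kc u v + Kc v u + 1.
have K0 : 0 < K by rewrite /K ltr_wpDl // addr_ge0 // Kc_ge0.
have d0 : 0 < `|d| by rewrite normr_gt0.
set e := `|d| / (2 * K).
have e0 : 0 < e by rewrite divr_gt0 // mulr_gt0.
have /cvgrPdist_lt /(_ e e0) /nbhs_ballP [r r0 Hr] := Hc x.
set eps := r / (`|u| + `|v| + 1).
have nuv : 0 < `|u| + `|v| + 1 by rewrite ltr_wpDl // addr_ge0.
have eps0 : 0 < eps by rewrite divr_gt0.
have close : forall s t, 0 <= s <= eps -> 0 <= t <= eps ->
    `|H x - H (x + s *: u + t *: v)| < e.
  move=> s t /andP[s0 se] /andP[t0 te]; apply: Hr; rewrite -ball_normE /=.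
  rewrite -(addrA x) opprD addrA subrr add0r normrN.
  apply: le_lt_trans (ler_normD _ _) _; rewrite !normrZ !ger0_norm //.
  have : s * `|u| + t * `|v| <= eps * (`|u| + `|v|).
    by rewrite mulrDr lerD // ler_wpM2r.
  move/le_lt_trans; apply.
  have r0' : 0 < r := r0.
  by rewrite /eps mulrAC ltr_pdivrMr // ltr_pM2l // ltrDl ltr01.
have [s [t [sin tin E1]]] := mixed Df Dg x u v eps0.
have [s' [t' [sin' tin' E2]]] := mixed Df Dg x v u eps0.
have Heq : dotv (H (x + s *: u + t *: v) *m v) u = dotv (H (x + s' *: v + t' *: u) *m u) v.
  apply: (mulIf (lt0r_neq0 eps0)); apply: (mulIf (lt0r_neq0 eps0)).
  by rewrite -E1 -E2 [x + eps *: v + _]addrAC; ring.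
have B1 := dot_bound (H x - H (x + s *: u + t *: v)) u v.
have B2 := dot_bound (H x - H (x + t' *: u + s' *: v)) v u.
have C1 := close _ _ sin tin.
have C2 := close _ _ tin' sin'.
rewrite [x + s' *: v + _]addrAC in Heq.
rewrite !mulmxBl !dotvBl in B1 B2.
have : `|d| <= `|H x - H (x + s *: u + t *: v)| * Kc u v + `|H x - H (x + t' *: u + s' *: v)| * Kc v u.
  have -> : d = (dotv (H x *m v) u - dotv (H (x + s *: u + t *: v) *m v) u)
              + (dotv (H (x + t' *: u + s' *: v) *m u) v - dotv (H x *m u) v).
    by rewrite /d Heq; ring.
  apply: le_trans (ler_normD _ _) _; apply: lerD => //.
  by rewrite distrC.
have : `|H x - H (x + s *: u + t *: v)| * Kc u v + `|H x - H (x + t' *: u + s' *: v)| * Kc v u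
       <= e * Kc u v + e * Kc v u.
  apply: lerD; apply: ler_wpM2r; rewrite ?Kc_ge0 //; exact: ltW.
have k1 := Kc_ge0 u v; have k2 := Kc_ge0 v u.
have : e * Kc u v + e * Kc v u < e * K + e * K.
  by rewrite -!mulrDr ltr_pM2l // /K; lra.
have -> : e * K + e * K = `|d| by rewrite /e; field; lra.
move=> h3 h1 h2; have := le_lt_trans (le_trans h2 h1) h3.
by rewrite ltxx.
Qed.
End S.


Section S.
Variables (R : realType) (n : nat).
Notation vec := 'cV[R]_n.
Notation mat := 'M[R]_n.

Lemma dotvC (a b : vec) : dotv a b = dotv b a.
Proof. by apply: eq_bigr => i _; rewrite mulrC. Qed.
Lemma dotvDl (a b c : vec) : dotv (a + b) c = dotv a c + dotv b c.
Proof. by rewrite /dotv -big_split; apply: eq_bigr => i _; rewrite !mxE mulrDl. Qed.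
Lemma dotvZl (k : R) (a c : vec) : dotv (k *: a) c = k * dotv a c.
Proof. by rewrite /dotv mulr_sumr; apply: eq_bigr => i _; rewrite !mxE mulrA. Qed.
Lemma dotvNl (a c : vec) : dotv (- a) c = - dotv a c.
Proof. by rewrite -scaleN1r dotvZl mulN1r. Qed.
Lemma dotv0l (c : vec) : dotv 0 c = 0.
Proof. by rewrite /dotv big1 // => i _; rewrite mxE mul0r. Qed.
Lemma dotvDr (a b c : vec) : dotv c (a + b) = dotv c a + dotv c b.
Proof. by rewrite dotvC dotvDl !(dotvC c). Qed.
Lemma dotvZr (k : R) (a c : vec) : dotv c (k *: a) = k * dotv c a.
Proof. by rewrite dotvC dotvZl dotvC. Qed.
Lemma dotvNr (a c : vec) : dotv c (- a) = - dotv c a.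
Proof. by rewrite dotvC dotvNl dotvC. Qed.
Lemma dotv0r (c : vec) : dotv c 0 = 0.
Proof. by rewrite dotvC dotv0l. Qed.

Lemma qformZ (k : R) (M : mat) v : qform (k *: M) v = k * qform M v.
Proof. by rewrite /qform -scalemxAl dotvZl. Qed.

Lemma qformN (M : mat) v : qform M (- v) = qform M v.
Proof. by rewrite /qform mulmxN dotvNl dotvNr opprK. Qed.

Lemma qform_ge0 (A : mat) v : pos_def A -> 0 <= qform A v.
Proof.
move=> pA; have [->|v0] := eqVneq v 0; last exact/ltW/pA.
by rewrite /qform dotv0r.
Qed.

Lemma pd_unit (A : mat) : pos_def A -> A \in unitmx.
Proof.
move=> pA; rewrite -unitmx_tr -row_free_unit; apply: inj_row_free => u Hu.
apply/eqP; apply/negPn/negP => hu.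
have v0 : u^T != 0 by apply: contra hu => /eqP h; rewrite -(trmxK u) h trmx0.
have := pA _ v0; rewrite /qform.
have -> : A *m u^T = 0 by rewrite -(trmxK A) -trmx_mul Hu trmx0.
by rewrite dotv0l ltxx.
Qed.

Definition symf (A : mat) := forall u v : vec, dotv (A *m v) u = dotv (A *m u) v.

Lemma qform_expand (A : mat) u w t : symf A ->
  qform A (u - t *: w) = qform A u - 2 * t * dotv (A *m u) w + t ^+ 2 * qform A w.
Proof.
move=> sA; rewrite /qform mulmxBr -scalemxAr.
rewrite dotvDl dotvNl !dotvDr !dotvNr !dotvZl !dotvZr (sA u w); ring.
Qed.

Lemma cs (A : mat) u w : symf A -> pos_def A ->
  (dotv (A *m u) w) ^+ 2 <= qform A u * qform A w.
Proof.
move=> sA pA; have [->|w0] := eqVneq w 0.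
  by rewrite dotv0r expr0n /= /qform mulmx0 dotv0l mulr0.
have qw := pA _ w0.
set b := dotv (A *m u) w.
have := qform_ge0 (u - (b / qform A w) *: w) pA.
rewrite qform_expand // => h.
have : 0 <= qform A u * qform A w - b ^+ 2.
  have -> : qform A u * qform A w - b ^+ 2 =
    (qform A u - 2 * (b / qform A w) * b + (b / qform A w) ^+ 2 * qform A w) * qform A w.
    by field; rewrite gt_eqF.
  by rewrite mulr_ge0 // ltW.
by rewrite subr_ge0.
Qed.

End S.


Section S.
Variables (R : realType) (n : nat).
Notation vec := 'cV[R]_n.
Notation mat := 'M[R]_n.

Lemma inv_mono (A B : mat) (k : R) : symf A -> pos_def A -> pos_def B -> 0 < k ->
  (forall v, k * qform A v <= qform B v) ->
  forall v, qform (invmx B) v <= k^-1 * qform (invmx A) v.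
Proof.
move=> sA pA pB k0 hk v.
have uA := pd_unit pA; have uB := pd_unit pB.
set u := invmx B *m v; set w := invmx A *m v.
have Bu : B *m u = v by rewrite /u mulKVmx.
have Aw : A *m w = v by rewrite /w mulKVmx.
have pE : qform (invmx B) v = qform B u by rewrite /qform Bu dotvC.
have qE : qform (invmx A) v = qform A w by rewrite /qform Aw dotvC.
rewrite pE qE.
have c : (dotv (A *m w) u) ^+ 2 <= qform A w * qform A u := cs w u sA pA.
have pv : dotv v u = qform B u by rewrite /qform Bu.
rewrite Aw pv in c.
have p0 := qform_ge0 u pB; have q0 := qform_ge0 w pA.
have hu := hk u.
have hu' : qform A u <= k^-1 * qform B u.
  by rewrite ler_pdivlMl // mulrC; rewrite mulrC in hu.
set p := qform B u in c p0 hu hu' *; set q := qform A w in c q0 *.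
have c2 : p ^+ 2 <= q * (k^-1 * p).
  apply: le_trans c _; apply: ler_wpM2l => //.
have [->|pp] := eqVneq p 0; first by rewrite mulr_ge0 // invr_ge0 ltW.
have pp0 : 0 < p by rewrite lt_def pp.
have ki : 0 < k^-1 by rewrite invr_gt0.
rewrite expr2 in c2.
have : p * p <= (k^-1 * q) * p by rewrite (mulrC k^-1) -mulrA.
by rewrite ler_pM2r.
Qed.

Lemma gcs (A : mat) (z h : vec) : symf A -> pos_def A ->
  `|dotv z h| <= Num.sqrt (qform (invmx A) z) * Num.sqrt (qform A h).
Proof.
move=> sA pA; have uA := pd_unit pA.
set w := invmx A *m z.
have Aw : A *m w = z by rewrite /w mulKVmx.
have -> : qform (invmx A) z = qform A w by rewrite /qform Aw dotvC.
rewrite -Aw -sqrtrM ?qform_ge0 // -sqrtr_sqr ler_sqrt ?mulr_ge0 ?qform_ge0 //.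
exact: cs.
Qed.

End S.


Lemma num_key (R : realType) (a c t : R) : 0 <= a -> a <= c -> c < 1 -> 0 <= t ->
  t ^+ 2 <= 4 * a ^+ 2 * (1 + 2 * a) -> (1 - c) ^+ 2 * (1 + t) <= 1.
Proof.
move=> a0 ac c1 t0 ht.
have X0 : 0 <= (1 - a) * t by rewrite mulr_ge0 // subr_ge0; lra.
have X2 : ((1 - a) * t) ^+ 2 <= (2 * a) ^+ 2.
  rewrite exprMn; apply: le_trans (ler_wpM2l _ ht) _; first by rewrite sqr_ge0.
  have h1 : (1 + 2 * a) * (1 - a) ^+ 2 <= 1 by nra.
  nra.
have X : (1 - a) * t <= 2 * a.
  by rewrite -(ler_pXn2r (n := 2)) // ?nnegrE //; lra.
have h2 : (1 - c) ^+ 2 <= (1 - a) ^+ 2 by nra.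
nra.
Qed.

Unset Implicit Arguments.
Theorem lemma7 (R : realType) (n : nat) (f : 'cV[R]_n -> R)
    (g : 'cV[R]_n -> 'cV[R]_n) (H : 'cV[R]_n -> 'M[R]_n)
    (Lsemi Lest c : R) (xk : 'cV[R]_n) :
  convex_fun f ->
  is_C2_with f g H ->
  (forall x, pos_def (H x)) ->
  semi_strongly_sc H Lsemi ->
  0 < Lest -> Lsemi <= Lest ->
  0 < c < 1 ->
  dnorm H xk (g xk) <= ((2 * c + 1) ^+ 2 - 1) / (2 * Lest) ->
  loewner_le (invmx (H (aicn_step g H Lest xk)))
             ((1 - c) ^-2 *: invmx (H xk)).
Proof.
move=> _ [Df [Dg Hc]] pd semi L0 LsL /andP[c0 c1] hd.
have sym : forall p, symf (H p) by move=> p u v; exact: hess_sym Df Dg Hc p u v.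
have key : forall z w v, qform (H w) v <= qform (H z) v * (1 + Lest * lnorm H z (w - z)).
  move=> z w v.
  have s1 := semi z w v.
  have s2 := gcs ((H w - H z) *m v) v (sym z) (pd z).
  rewrite /qform mulmxBl dotvBl -/(qform (H w) v) -/(qform (H z) v) in s2.
  have q0 := qform_ge0 v (pd z).
  have r0 : 0 <= lnorm H z (w - z) by exact: sqrtr_ge0.
  have l2 : lnorm H z v ^+ 2 = qform (H z) v by rewrite sqr_sqrtr.
  have l0 : 0 <= lnorm H z v by exact: sqrtr_ge0.
  rewrite -/(dnorm H z _) -/(lnorm H z v) in s2.
  have : qform (H w) v - qform (H z) v <= Lsemi * lnorm H z (w - z) * lnorm H z v * lnorm H z v.
    apply: le_trans (ler_norm _) _; apply: le_trans s2 _.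
    rewrite -mulmxBl; by apply: ler_wpM2r.
  rewrite -l2; move: (lnorm H z (w - z)) (lnorm H z v) r0 l0 => rr ll r0 l0 h.
  have : Lsemi * rr * ll * ll <= Lest * rr * ll * ll.
    by rewrite -!mulrA ler_wpM2r // !mulr_ge0.
  nra.
set A := H xk; set y := aicn_step g H Lest xk; set B := H y.
set al := aicn_alpha g H Lest xk.
set w := invmx A *m g xk.
have uA := pd_unit (pd xk).
have Aw : A *m w = g xk by rewrite /w mulKVmx.
set h := y - xk.
have hE : h = - (al *: w).
  rewrite /h /y /aicn_step -/A -/w -/al.
  by rewrite addrC addKr.
set d0 := qform (invmx A) (g xk).
have d0E : d0 = qform A w by rewrite /d0 /qform Aw dotvC.
have d00 : 0 <= d0 by rewrite d0E; exact: (qform_ge0 _ (pd xk)).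
set d := dnorm H xk (g xk).
have dE : d = Num.sqrt d0 by [].
set r := lnorm H xk h.
have rE : r = `|al| * d.
  rewrite /r /lnorm -/A hE qformN /qform -scalemxAr dotvZl dotvZr mulrA -expr2.
  by rewrite -/(qform A w) -d0E sqrtrM ?sqr_ge0 // sqrtr_sqr.
have r0 : 0 <= r by rewrite rE mulr_ge0 // sqrtr_ge0.
have Lr : Lest * r <= 2 * c.
  have [gx|gx] := eqVneq (g xk) 0.
    have : w = 0 by rewrite /w gx mulmx0.
    move=> w0; rewrite rE dE d0E w0 /qform mulmx0 dotv0l sqrtr0 mulr0 mulr0.
    by rewrite mulr_ge0 // ltW.
  have wn0 : w != 0 by apply: contra gx => /eqP w0; rewrite -Aw w0 mulmx0.
  have dp : 0 < d by rewrite dE sqrtr_gt0 d0E; exact: pd.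
  set S := Num.sqrt (1 + 2 * Lest * d).
  have alE : al = (-1 + S) / (Lest * d) by rewrite /al /aicn_alpha (negbTE gx).
  have Ld : 0 < 2 * Lest * d by rewrite !mulr_gt0.
  have S1 : 1 <= S by rewrite -sqrtr1 ler_sqrt; lra.
  have hd' : 2 * Lest * d <= (2 * c + 1) ^+ 2 - 1.
    by move: hd; rewrite -/d ler_pdivlMr ?mulr_gt0 //; lra.
  have S2 : S <= 2 * c + 1.
    have hc : 0 <= 2 * c + 1 by rewrite addr_ge0 // mulr_ge0 // ltW.
    rewrite -(ger0_norm hc) -sqrtr_sqr ler_sqrt ?sqr_ge0 //; lra.
  have ald : al * (Lest * d) = -1 + S by rewrite alE divfK // mulf_neq0 ?gt_eqF.
  have al0 : 0 <= al.
    have : 0 <= al * (Lest * d) by rewrite ald; lra.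
    by rewrite pmulr_lge0 // mulr_gt0.
  rewrite rE ger0_norm // mulrCA ald; lra.
set s := lnorm H y (xk - y).
have sE : s = Num.sqrt (qform B h) by rewrite /s /lnorm -/B -opprB qformN.
have step1 := key xk y h.
rewrite -/A -/h -/r in step1.
have qAh : qform A h = r ^+ 2 by rewrite /r /lnorm sqr_sqrtr //; exact: (qform_ge0 _ (pd xk)).
have step2 := key y xk.
rewrite -/B -/s in step2.
have s0 : 0 <= s by rewrite sE sqrtr_ge0.
have qBh : s ^+ 2 = qform B h by rewrite sE sqr_sqrtr //; exact: (qform_ge0 _ (pd y)).
have nk : (1 - c) ^+ 2 * (1 + Lest * s) <= 1.
  apply: (@num_key R (Lest * r / 2)); rewrite ?divr_ge0 ?mulr_ge0 //; try lra.
  have : (Lest * s) ^+ 2 <= Lest ^+ 2 * (r ^+ 2 * (1 + Lest * r)).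
    by rewrite exprMn qBh -qAh ler_wpM2l // sqr_ge0.
  move=> h'; apply: le_trans h' _; apply: le_trans; last by apply: lexx.
  have -> : 4 * (Lest * r / 2) ^+ 2 * (1 + 2 * (Lest * r / 2)) = Lest ^+ 2 * (r ^+ 2 * (1 + Lest * r)).
    by field.
  by [].
have k0 : 0 < (1 - c) ^+ 2 by rewrite exprn_gt0 // subr_gt0.
have hk : forall v, (1 - c) ^+ 2 * qform A v <= qform B v.
  move=> v; have := step2 v; have q0 := qform_ge0 v (pd y).
  have ls0 : 0 <= Lest * s by rewrite mulr_ge0 // ltW.
  rewrite -/B => h2.
  apply: le_trans (ler_wpM2l (ltW k0) h2) _.
  rewrite mulrCA -[leRHS]mulr1; by apply: ler_wpM2l.
move=> v; rewrite qformZ.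
exact: (inv_mono (sym xk) (pd xk) (pd y) k0 hk).
Qed.
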